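(* Let $k\ge2$, $1\le\nu\le k-1$, $d\ge2$, $\delta\in\mathbb{C}^*$, and let \[ S(z_1,\dots,z_k)=\big(z_2,\dots,z_k,\ \delta(z_{k-\nu+1}^d-z_1)\big) \] be the shift-like automorphism of $\mathbb{C}^k$ of type $\nu$ and degree $d$, with positive Green's function \[ G^+(z)=\lim_{n\to\infty}\frac1{d^n}\log^+\|S^{\nu n}(z)\|. \] For $R>0$ and $1\le i\le k$ let $V_i=\{z\in\mathbb{C}^k:\|z\|_\infty=|z_i|\ge R\}$, $V_R=\overline{\Delta^k(0;R)}$, $V_R^+=\bigcup_{i=k-\nu+1}^kV_i$ and $V_R^-=\bigcup_{i=1}^{k-\nu}V_i$. Then for every $c>0$ there exists $R>0$ such that $G^+(z)\ge c$ for every $z\in V_R^+$; i.e. $\{z\in\mathbb{C}^k:G^+(z)<c\}\subset V_R\cup V_R^-$.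
   Context: $\|z\|_\infty=\max_i|z_i|$, $\log^+t=\max(\log t,0)$, $S^m$ is the $m$-th iterate of $S$, and $\Delta^k(0;R)$ is the polydisc of polyradius $(R,\dots,R)$ centered at $0$. *)

(* Defs.v *)
From HB Require Import structures.
From mathcomp Require Import all_boot all_order all_algebra.
From mathcomp Require Import all_classical all_reals all_analysis.
From mathcomp Require Import complex.
Set Implicit Arguments. Unset Strict Implicit. Unset Printing Implicit Defensive.
Import Order.TTheory GRing.Theory Num.Theory.
Import numFieldNormedType.Exports.
Local Open Scope ring_scope.
Local Open Scope complex_scope.
Local Open Scope classical_set_scope.

Definition cabs (R : realType) (z : R[i]) : R := Normc.normc z.

(* coordinate j (0-based) of z : C^k, 0 out of range *)
Definition coord (R : realType) (k : nat) (z : 'rV[R[i]]_k) (j : nat) : R[i] :=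
  match @insub nat (fun j => j < k)%N 'I_k j with Some i => z 0 i | None => 0 end.

(* shift-like map (0-based indices):
   S(z)_i = z_{i+1} for i < k-1, S(z)_{k-1} = delta (z_{k-nu}^d - z_0) *)
Definition shift_like (R : realType) (k nu d : nat) (delta : R[i])
  (z : 'rV[R[i]]_k) : 'rV[R[i]]_k :=
  \row_(i < k) (if (i.+1 < k)%N then coord z i.+1
                else delta * (coord z (k - nu) ^+ d - coord z 0)).

Definition supnorm (R : realType) (k : nat) (z : 'rV[R[i]]_k) : R :=
  \big[Num.max/0]_(i < k) cabs (z 0 i).

Definition logplus (R : realType) (t : R) : R := Num.max (ln t) 0.

Definition Gplus (R : realType) (k nu d : nat) (delta : R[i])
  (z : 'rV[R[i]]_k) : R :=
  lim ((fun n : nat => (d%:R ^+ n)^-1 *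
          logplus (supnorm (iter (nu * n) (shift_like nu d delta) z))) @ \oo).

(* V_R^+ = union of V_i, i = k-nu+1..k (1-based), i.e. 0-based k-nu <= i < k,
   where V_i = { z : ||z||_oo = |z_i| >= R } *)
Definition VRplus (R : realType) (k nu : nat) (r : R) : set 'rV[R[i]]_k :=
  [set z | exists i : 'I_k, (k - nu <= i)%N /\
             supnorm z = cabs (z 0 i) /\ r <= cabs (z 0 i)].

(* Main.v *)
Require Import Defs.
From HB Require Import structures.
From mathcomp Require Import all_boot all_order all_algebra.
From mathcomp Require Import all_classical all_reals all_analysis.
From mathcomp Require Import complex.
From mathcomp Require Import zify ring lra.
Set Implicit Arguments. Unset Strict Implicit. Unset Printing Implicit Defensive.
Import Order.TTheory GRing.Theory Num.Theory.
Import numFieldNormedType.Exports.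
Local Open Scope ring_scope.
Local Open Scope complex_scope.
Local Open Scope classical_set_scope.

Lemma cabs_ge0 (R : realType) (x : R[i]) : 0 <= cabs x.
Proof. by case: x => a b; rewrite /cabs /=; exact: sqrtr_ge0. Qed.

Lemma cabsM (R : realType) (x y : R[i]) : cabs (x * y) = cabs x * cabs y.
Proof. exact: Normc.normcM. Qed.

Lemma cabsX (R : realType) (x : R[i]) n : cabs (x ^+ n) = cabs x ^+ n.
Proof.
elim: n => [|n IH]; first by rewrite !expr0 /cabs Normc.normc1.
by rewrite !exprS cabsM IH.
Qed.

Lemma cabsD (R : realType) (x y : R[i]) : cabs (x + y) <= cabs x + cabs y.
Proof. exact: (@le_normcD R). Qed.

Lemma cabsN (R : realType) (x : R[i]) : cabs (- x) = cabs x.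
Proof. exact: (@normcN R). Qed.

Lemma cabsB (R : realType) (x y : R[i]) : cabs (x - y) <= cabs x + cabs y.
Proof. by rewrite -(cabsN y); apply: cabsD. Qed.

Lemma cabsB_ge (R : realType) (x y : R[i]) : cabs x - cabs y <= cabs (x - y).
Proof.
have := cabsD (x - y) y; rewrite subrK => h; lra.
Qed.

Lemma coordE (R : realType) k (w : 'rV[R[i]]_k) (i : 'I_k) : Defs.coord w i = w 0 i.
Proof. by rewrite /Defs.coord (insubT (fun j => j < k)%N (ltn_ord i)) /=; congr (w 0 _); apply: val_inj. Qed.

Lemma coordE' (R : realType) k (w : 'rV[R[i]]_k) p (H : (p < k)%N) :
  Defs.coord w p = w 0 (Ordinal H).
Proof. by rewrite -coordE. Qed.

Lemma coord_S (R : realType) k nu d (delta : R[i]) (w : 'rV[R[i]]_k) p :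
  (p < k)%N -> Defs.coord (shift_like nu d delta w) p =
  if (p.+1 < k)%N then Defs.coord w p.+1
  else delta * (Defs.coord w (k - nu) ^+ d - Defs.coord w 0).
Proof. by move=> H; rewrite (coordE' _ H) mxE. Qed.

Lemma coord_iter (R : realType) k nu d (delta : R[i]) (w : 'rV[R[i]]_k) q p :
  (1 <= nu < k)%N -> (q <= nu)%N -> (p < k)%N ->
  Defs.coord (iter q (shift_like nu d delta) w) p =
  if (p + q < k)%N then Defs.coord w (p + q)
  else delta * (Defs.coord w (p + q - nu) ^+ d - Defs.coord w (p + q - k)).
Proof.
move=> Hnu; elim: q p => [|q IH] p Hq Hp.
  by rewrite /= addn0 Hp.
rewrite iterS coord_S //.
case: ifP => Hp1.
  rewrite IH //; last by lia.
  by rewrite addSnnS.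
rewrite !IH //; try lia.
have -> : (k - nu + q < k)%N = true by lia.
have -> : (0 + q < k)%N = true by lia.
have -> : (p + q.+1 < k)%N = false by lia.
have -> : (k - nu + q = p + q.+1 - nu)%N by lia.
by have -> : (0 + q = p + q.+1 - k)%N by lia.
Qed.
Lemma sup_ge (R : realType) k (w : 'rV[R[i]]_k) p :
  (p < k)%N -> cabs (Defs.coord w p) <= supnorm w.
Proof. by move=> H; rewrite (coordE' _ H); exact: le_bigmax. Qed.

Lemma sup_le (R : realType) k (w : 'rV[R[i]]_k) (M : R) :
  0 <= M -> (forall p, (p < k)%N -> cabs (Defs.coord w p) <= M) -> supnorm w <= M.
Proof.
move=> M0 H; apply: bigmax_le => // i _; rewrite -coordE; exact: H.
Qed.

Lemma argmax_ex (R : realType) (f : nat -> R) a n :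
  exists p, (a <= p <= a + n)%N /\ forall q, (a <= q <= a + n)%N -> f q <= f p.
Proof.
elim: n => [|n [p [Hp H]]].
  exists a; split; first by rewrite addn0 leqnn.
  by move=> q; rewrite addn0 -eqn_leq => /eqP ->.
have [le|lt] := leP (f (a + n.+1)) (f p).
  exists p; split; first by lia.
  move=> q Hq; have [e|ne] := eqVneq q (a + n.+1); first by rewrite e.
  by apply: H; lia.
exists (a + n.+1)%N; split; first by lia.
move=> q Hq; have [e|ne] := eqVneq q (a + n.+1); first by rewrite e.
by apply: le_trans (H _ _) (ltW lt); lia.
Qed.

Lemma coord_T (R : realType) k nu d (delta : R[i]) (w : 'rV[R[i]]_k) p :
  (1 <= nu < k)%N -> (p < k)%N ->
  Defs.coord (iter nu (shift_like nu d delta) w) p =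
  if (p + nu < k)%N then Defs.coord w (p + nu)
  else delta * (Defs.coord w p ^+ d - Defs.coord w (p + nu - k)).
Proof.
move=> Hnu Hp; rewrite coord_iter //; case: ifP => // _.
by rewrite addnK.
Qed.
Lemma real_facts (R : realType) (m M X : R) :
  0 < m -> 2 <= M -> 2 <= m * M -> 1 <= X ->
  [/\ m * (M * M * X) / 2 <= m * (M * M * X - M),
      M <= m * (M * M * X) / 2,
      M <= M * M * X &
      m * (M * M * X + M) <= 2 * m * (M * M * X)].
Proof.
move=> m0 M2 mM X1.
have MX : 2 <= M * X by nra.
have MMX : 2 * M <= M * M * X by nra.
split.
- nra.
- have : 2 <= m * M * X by nra.
  nra.
- nra.
- nra.
Qed.
Definition Inv (R : realType) k nu (w : 'rV[R[i]]_k) :=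
  exists p, (k - nu <= p < k)%N /\
    forall q, (q < k)%N -> cabs (Defs.coord w q) <= cabs (Defs.coord w p).

Lemma inv_sup (R : realType) k (w : 'rV[R[i]]_k) p :
  (p < k)%N ->
  (forall q, (q < k)%N -> cabs (Defs.coord w q) <= cabs (Defs.coord w p)) ->
  supnorm w = cabs (Defs.coord w p).
Proof.
move=> Hp H; apply/le_anti/andP; split; last exact: sup_ge.
by apply: sup_le => //; exact: cabs_ge0.
Qed.

Lemma step (R : realType) k nu d (delta : R[i]) (w : 'rV[R[i]]_k) :
  (1 <= nu < k)%N -> (2 <= d)%N -> 0 < cabs delta ->
  Inv nu w -> 2 <= supnorm w -> 2 <= cabs delta * supnorm w ->
  [/\ Inv nu (iter nu (shift_like nu d delta) w),
      supnorm w <= supnorm (iter nu (shift_like nu d delta) w),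
      cabs delta * supnorm w ^+ d / 2 <= supnorm (iter nu (shift_like nu d delta) w) &
      supnorm (iter nu (shift_like nu d delta) w) <= (1 + 2 * cabs delta) * supnorm w ^+ d].
Proof.
move=> Hnu Hd; have [d' ->] : exists d', d = d'.+2 by exists (d - 2)%N; lia.
move=> m0 [p [/andP[Hp1 Hp2] Hmax]] M2 mM.
set w' := iter nu (shift_like nu d'.+2 delta) w.
set m := cabs delta.
have Msup := inv_sup Hp2 Hmax.
set M := supnorm w in M2 mM Msup *.
have M0 : 0 <= M by lra.
have bnd q : (q < k)%N -> cabs (Defs.coord w q) <= M by move=> Hq; exact: sup_ge.
have Mdge : M <= M ^+ d'.+2.
  rewrite !exprS mulrA.
  have X1 : 1 <= M ^+ d' by apply: exprn_ege1; lra.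
  have : M <= M * M by nra.
  nra.
have [F1 F2 F3 F4] : [/\ m * M ^+ d'.+2 / 2 <= m * (M ^+ d'.+2 - M),
      M <= m * M ^+ d'.+2 / 2, M <= M ^+ d'.+2 & m * (M ^+ d'.+2 + M) <= 2 * m * M ^+ d'.+2].
  have -> : M ^+ d'.+2 = M * M * M ^+ d' by rewrite !exprS mulrA.
  apply: real_facts => //; apply: exprn_ege1; lra.
have lowp : m * (M ^+ d'.+2 - M) <= cabs (Defs.coord w' p).
  rewrite /w' coord_T //.
  have -> : (p + nu < k)%N = false by lia.
  rewrite cabsM; apply: ler_wpM2l; first exact: cabs_ge0.
  apply: le_trans (cabsB_ge _ _); rewrite cabsX -Msup.
  by apply: lerB => //; apply: bnd; lia.
have upq q : (q < k)%N -> cabs (Defs.coord w' q) <= (1 + 2 * m) * M ^+ d'.+2.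
  move=> Hq; rewrite /w' coord_T //; case: ifP => Hqn.
    have := bnd _ Hqn; have : 0 <= m * M ^+ d'.+2 by apply: mulr_ge0; [exact: ltW|exact: exprn_ge0].
    nra.
  rewrite cabsM; apply: le_trans (_ : m * (M ^+ d'.+2 + M) <= _); last first.
    have : 0 <= M ^+ d'.+2 by exact: exprn_ge0.
    nra.
  apply: ler_wpM2l; first exact: cabs_ge0.
  apply: le_trans (cabsB _ _) _; rewrite cabsX.
  apply: lerD; last by apply: bnd; lia.
  by apply: lerXn2r; rewrite ?nnegrE ?cabs_ge0 //; apply: bnd.
have oldq q : (q < k)%N -> (q + nu < k)%N -> cabs (Defs.coord w' q) <= M.
  by move=> Hq Hqn; rewrite /w' coord_T // Hqn; apply: bnd.
have [p' [Hp' Hmax']] := argmax_ex (fun q => cabs (Defs.coord w' q)) (k - nu) nu.-1.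
have Hp'k : (k - nu <= p' < k)%N by lia.
have Hmax'' q : (q < k)%N -> cabs (Defs.coord w' q) <= cabs (Defs.coord w' p').
  move=> Hq; have [Hqn|Hqn] := ltnP (q + nu) k.
    apply: le_trans (oldq _ Hq Hqn) _.
    apply: le_trans F2 _; apply: le_trans F1 _; apply: le_trans lowp _.
    by apply: Hmax'; lia.
  by apply: Hmax'; lia.
have Hp'2 : (p' < k)%N by lia.
have Msup' := inv_sup Hp'2 Hmax''.
have lowp' : cabs (Defs.coord w' p) <= supnorm w' by apply: sup_ge.
split.
- by exists p'; split.
- lra.
- lra.
- apply: sup_le; last exact: upq.
  have : 0 <= M ^+ d'.+2 by exact: exprn_ge0.
  nra.
Qed.

Theorem proposition4p3 (R : realType) (k nu d : nat) (delta : R[i]) :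
  (2 <= k)%N -> (1 <= nu <= k - 1)%N -> (2 <= d)%N -> delta != 0 ->
  forall c : R, 0 < c ->
  exists r : R, 0 < r /\
    forall z : 'rV[R[i]]_k, VRplus nu r z -> c <= Gplus nu d delta z.
Proof.
move=> Hk /andP[Hnu1 Hnu2] Hd hdelta c c0.
have Hnu : (1 <= nu < k)%N by lia.
have m0 : 0 < cabs delta.
  rewrite lt_def cabs_ge0 andbT; apply/eqP => /(@Normc.eq0_normc R) h.
  by rewrite h eqxx in hdelta.
set m := cabs delta in m0 *.
set D : R := d%:R.
have D1 : 1 < D by rewrite /D ltr1n; lia.
set K := 1 + 2 * m.
set B := `|ln (m / 2)| + `|ln K|.
have B0 : 0 <= B by apply: addr_ge0.
set C := B / (D - 1).
have C0 : 0 <= C by apply: divr_ge0 => //; lra.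
have CD : C * (D - 1) = B by rewrite /C divfK //; apply/eqP => h; lra.
set r := Num.max (Num.max 2 (2 / m)) (expR (c + C)).
have r2 : 2 <= r by rewrite /r !le_max lexx.
have rm' : 2 / m <= r by rewrite /r !le_max lexx orbT.
have rm : 2 <= m * r.
  have e : m * (2 / m) = 2 by rewrite mulrC divfK //; apply/eqP => h; rewrite h ltxx in m0.
  by rewrite -{1}e; apply: ler_wpM2l => //; exact: ltW.
have rexp : expR (c + C) <= r by rewrite /r le_max lexx orbT.
exists r; split; first lra.
move=> z [i [Hi [Hsup Hr]]].
set w := fun n => iter n (iter nu (shift_like nu d delta)) z.
have Hw n : iter (nu * n) (shift_like nu d delta) z = w n by rewrite mulnC iterM.
have inv0 : Inv nu z.
  exists (nat_of_ord i); split; first by rewrite Hi ltn_ord.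
  by move=> q Hq; rewrite coordE -Hsup; apply: sup_ge.
have inv n : Inv nu (w n) /\ r <= supnorm (w n).
  elim: n => [|n [IHi IHr]]; first by split => //; rewrite /w /= Hsup.
  have [S1 S2 _ _] := step Hnu Hd m0 IHi (le_trans r2 IHr)
     (le_trans rm (ler_wpM2l (ltW m0) IHr)).
  by rewrite /w iterS; split => //; apply: le_trans S2.
set L := fun n => ln (supnorm (w n)).
have Mpos n : 0 < supnorm (w n) by have [_ h] := inv n; lra.
have Lstep n : ln (m / 2) <= L n.+1 - D * L n <= ln K.
  have [IHi IHr] := inv n.
  have [_ _ S3 S4] := step Hnu Hd m0 IHi (le_trans r2 IHr)
     (le_trans rm (ler_wpM2l (ltW m0) IHr)).
  have wS : w n.+1 = iter nu (shift_like nu d delta) (w n) by rewrite /w iterS.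
  have MdP : 0 < supnorm (w n) ^+ d by apply: exprn_gt0.
  have lnd : ln (supnorm (w n) ^+ d) = D * L n by rewrite lnXn // mulr_natl.
  have Mp' : 0 < supnorm (iter nu (shift_like nu d delta) (w n)) by rewrite -wS.
  rewrite /L wS; apply/andP; split.
  - rewrite lerBrDr -lnd -lnM ?posrE ?divr_gt0 //.
    rewrite ler_ln ?posrE ?mulr_gt0 ?divr_gt0 //.
    by rewrite mulrAC.
  - rewrite lerBlDr -lnd -lnM ?posrE //; last by rewrite /K; lra.
    rewrite ler_ln ?posrE ?mulr_gt0 //.
    by rewrite /K; lra.
set e := fun n : nat => (D ^+ n)^-1.
have D0 : D != 0 by apply/eqP => h; lra.
have epos n : 0 < e n by rewrite /e invr_gt0 exprn_gt0 //; lra.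
have eS n : e n = D * e n.+1 by rewrite /e exprS invfM mulrA divff // mul1r.
set a := fun n => e n * L n.
set b := fun n => a n - C * e n.
set b' := fun n => a n + C * e n.
have Bm : - B <= ln (m / 2).
  have := ler_normr (ln (m / 2)) (ln (m/2)); rewrite lexx /= => h.
  have : 0 <= `|ln K| by [].
  have : - ln (m / 2) <= `|ln (m / 2)| by rewrite -normrN ler_norm.
  rewrite /B; lra.
have BK : ln K <= B.
  have : ln K <= `|ln K| by rewrite ler_norm.
  have : 0 <= `|ln (m / 2)| by [].
  rewrite /B; lra.
have b_inc n : b n <= b n.+1.
  have [h1 h2] := andP (Lstep n).
  have hx : e n.+1 * (- B) <= e n.+1 * (L n.+1 - D * L n).
    by apply: ler_wpM2l; [exact: ltW | lra].
  have hc : C * D * e n.+1 = B * e n.+1 + C * e n.+1.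
    by rewrite -CD; ring.
  rewrite /b /a (eS n); nra.
have b'_dec n : b' n.+1 <= b' n.
  have [h1 h2] := andP (Lstep n).
  have hx : e n.+1 * (L n.+1 - D * L n) <= e n.+1 * B.
    by apply: ler_wpM2l; [exact: ltW | lra].
  have hc : C * D * e n.+1 = B * e n.+1 + C * e n.+1.
    by rewrite -CD; ring.
  rewrite /b' /a (eS n); nra.
have bub n : b n <= b' 0.
  apply: (@le_trans _ _ (b' n)).
    rewrite /b /b'; have := epos n; nra.
  elim: n => [|n IH]; first exact: lexx.
  exact: le_trans (b'_dec n) IH.
have hb : cvgn b.
  apply: nondecreasing_is_cvgn; first exact/nondecreasing_seqP.
  by exists (b' 0) => _ [n _ <-].
have hb' : b @ \oo --> limn b by exact: hb.
have he : e @ \oo --> 0.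
  have -> : e = (GRing.exp (D^-1)) by apply/funext => n; rewrite /e exprVn.
  apply: cvg_expr; rewrite ger0_norm ?invr_ge0; last lra.
  by rewrite invf_lt1; lra.
have ha : a @ \oo --> limn b.
  have -> : a = (fun n => b n + C * e n) by apply/funext => n; rewrite /b subrK.
  have hCe : (fun n => C * e n) @ \oo --> 0.
    have h := cvgMl_tmp (a := C) he; rewrite mulr0 in h; exact: h.
  have h := cvgD hb' hCe; rewrite addr0 in h; exact: h.
have Gq : (fun n : nat => (d%:R ^+ n)^-1 *
          logplus (supnorm (iter (nu * n) (shift_like nu d delta) z))) = a.
  apply/funext => n; rewrite Hw /logplus /a /e /L /D.
  congr (_ * _); apply/max_idPl.
  by apply: ln_ge0; have [_ h] := inv n; lra.
have Ga : Gplus nu d delta z = limn b.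
  by rewrite /Gplus Gq; apply/cvg_lim => //.
rewrite Ga.
apply: (@le_trans _ _ (b 0%N)); last first.
  by apply: nondecreasing_cvgn_le => //; exact/nondecreasing_seqP.
have e0 : e 0%N = 1 by rewrite /e expr0 invr1.
rewrite /b /a e0 mul1r mulr1 /L /w /=.
have : c + C <= ln (supnorm z).
  rewrite -(expRK (c + C)) ler_ln ?posrE ?expR_gt0 //; last lra.
  by apply: le_trans rexp _; rewrite Hsup.
lra.
Qed.
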